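(* Let $\mu$ be a probability distribution on $Q_d$ and let $X\in Q_d$ with $|X|=k\ge1$ and $P_1(X,\mathbf 0)>\frac12$. Let $I=\{i: x_i=1\}$. Then there exists $i\in I$ with \[ w_i^0<\begin{cases}\frac34-\frac1{4k} & \text{if $k$ is odd},\\[2pt] \frac34-\frac1{2k} & \text{if $k$ is even}.\end{cases} \]
   Context: $Q_d=\{0,1\}^d$ with the Hamming distance $d(X,Y)=|\{i: x_i\neq y_i\}|$; $|X|$ is the number of coordinates of $X$ equal to $1$. A probability distribution on $Q_d$ is a function $\mu:Q_d\to\mathbb R_{\ge0}$ with $\sum_{V\in Q_d}\mu(V)=1$, extended to subsets by $\mu(\mathcal A)=\sum_{V\in\mathcal A}\mu(V)$. For $A,B\in Q_d$ let $V(A,B)=\{Z\in Q_d: d(Z,A)<d(Z,B)\}$ and $T(A,B)=\{Z\in Q_d: d(Z,A)=d(Z,B)\}$, and $P_1(A,B)=\mu(V(A,B))+\frac12\mu(T(A,B))$. For $i\in[d]$, $w_i^0=\mu(\{Z\in Q_d: z_i=0\})$. $\mathbf 0=(0,\dots,0)$. *)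

(* Defs.v *)
From mathcomp Require Import all_boot all_order all_algebra.
Set Implicit Arguments. Unset Strict Implicit. Unset Printing Implicit Defensive.
Import Order.TTheory GRing.Theory Num.Theory.
Local Open Scope ring_scope.

(* The hypercube Q_d = {0,1}^d, points as finite functions 'I_d -> bool
   (true = 1, false = 0). *)
Definition cube (d : nat) := {ffun 'I_d -> bool}.

Definition hdist d (X Y : cube d) : nat := #|[set i : 'I_d | X i != Y i]|.

Definition weight d (X : cube d) : nat := #|[set i : 'I_d | X i]|.

Definition zero_pt d : cube d := [ffun _ => false].

Definition is_distr (R : numDomainType) d (mu : cube d -> R) : Prop :=
  (forall V, 0 <= mu V) /\ \sum_(V : cube d) mu V = 1.

Definition muS (R : numDomainType) d (mu : cube d -> R) (A : {set cube d}) : R :=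
  \sum_(V in A) mu V.

Definition Vor d (A B : cube d) : {set cube d} :=
  [set Z : cube d | (hdist Z A < hdist Z B)%N].
Definition Tie d (A B : cube d) : {set cube d} :=
  [set Z : cube d | hdist Z A == hdist Z B].

Definition P1 (R : numFieldType) d (mu : cube d -> R) (A B : cube d) : R :=
  muS mu (Vor A B) + 2^-1 * muS mu (Tie A B).

Definition w0 (R : numDomainType) d (mu : cube d -> R) (i : 'I_d) : R :=
  muS mu [set Z : cube d | ~~ Z i].

(* Main.v *)
Require Import Defs.
From mathcomp Require Import all_boot all_order all_algebra.
From mathcomp Require Import zify ring lra.
Import Order.TTheory GRing.Theory Num.Theory.
Local Open Scope ring_scope.

Lemma card_sum d (P : pred 'I_d) : #|[set i | P i]| = (\sum_i (P i : nat))%N.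
Proof.
rewrite -sum1_card big_mkcond /=; apply: eq_bigr => i _; rewrite inE.
by case: (P i).
Qed.

Lemma key_dist d (X Z : cube d) :
  (hdist Z X + 2 * #|[set i | X i && Z i]| = hdist Z (zero_pt d) + weight X)%N.
Proof.
rewrite /hdist /weight !card_sum big_distrr /= -!big_split /=.
apply: eq_bigr => i _; rewrite ffunE.
by case: (X i); case: (Z i).
Qed.

Lemma pt_nat (k hX h0 m : nat) : (hX + 2 * m = h0 + k)%N -> (1 <= k)%N ->
  ((hX < h0)%N -> ((if odd k then k.+1 else k.+2) <= 2 * m)%N) /\
  ((hX == h0) -> ((if odd k then k.+1 else k.+2) <= 4 * m)%N).
Proof.
move=> H k1; have Hk := odd_double_half k; rewrite -muln2 in Hk.
split; [move=> Hl | move=> /eqP Hl];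
case Ho: (odd k) Hk => /= Hk; lia.
Qed.

Theorem mainTheorem3 (R : realFieldType) (d : nat) (mu : cube d -> R)
  (X : cube d) (k : nat) :
  is_distr mu ->
  weight X = k -> (1 <= k)%N ->
  P1 mu X (zero_pt d) > 2^-1 ->
  exists i : 'I_d, X i /\
    w0 mu i < (if odd k then 3/4 - 1/(4 * k%:R) else 3/4 - 1/(2 * k%:R)).
Proof.
move=> [mu0 mu1] wk k1 HP.
set B := (if odd k then _ else _).
case: (boolP [exists i, X i && (w0 mu i < B)]) => [/existsP [i /andP[Xi Hi]]|H].
  by exists i.
exfalso.
have Hi : forall i, X i -> B <= w0 mu i.
  move=> i Xi; move: H => /existsPn /(_ i); by rewrite Xi /= -leNgt.
pose m (Z : cube d) := #|[set i | X i && Z i]|.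
pose c := if odd k then k.+1 else k.+2.
pose C : R := c%:R / 2.
have E1 : \sum_(Z : cube d) mu Z * (m Z)%:R = \sum_(i | X i) (1 - w0 mu i).
  have -> : \sum_(Z : cube d) mu Z * (m Z)%:R = \sum_(Z : cube d) \sum_(i | X i) mu Z * (Z i : nat)%:R.
    apply: eq_bigr => Z _; rewrite -mulr_sumr; congr (_ * _).
    rewrite /m card_sum natr_sum [RHS]big_mkcond; apply: eq_bigr => i _.
    by case: (X i).
  rewrite exchange_big; apply: eq_bigr => i Xi.
  have -> : \sum_(Z : cube d) mu Z * (Z i : nat)%:R = \sum_(Z : cube d | Z i) mu Z.
    rewrite [RHS]big_mkcond; apply: eq_bigr => Z _.
    by case: (Z i); rewrite ?mulr1 ?mulr0.
  rewrite -mu1 [\sum_(V : cube d) mu V](bigID (fun Z : cube d => Z i)) /= /w0 /muS.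
  have -> : \sum_(Z in [set Z : cube d | ~~ Z i]) mu Z = \sum_(Z : cube d | ~~ Z i) mu Z.
    by apply: eq_bigl => Z; rewrite inE.
  by rewrite addrK.
have E2 : P1 mu X (zero_pt d) * C <= \sum_(Z : cube d) mu Z * (m Z)%:R.
  rewrite /P1 /muS [X in (X + _) * _]big_mkcond [X in 2^-1 * X]big_mkcond.
  rewrite mulr_sumr -big_split mulr_suml /=; apply: ler_sum => Z _.
  have KD := @key_dist d X Z; rewrite wk in KD.
  have [HV HT] := pt_nat _ _ _ _ KD k1.
  rewrite /Vor /Tie !inE.
  have muZ := mu0 Z.
  case: ltnP => Hl.
    have -> : (hdist Z X == hdist Z (zero_pt d)) = false by apply/eqP; lia.
    have Hc := HV Hl.
    have : (c%:R : R) <= (2 * m Z)%:R by rewrite ler_nat.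
    rewrite natrM /C => Hc'.
    rewrite mulr0 addr0; nra.
  case: eqP => He; last by rewrite mulr0 addr0 mul0r mulr_ge0 ?ler0n.
  have Hc := HT (introT eqP He).
  have : (c%:R : R) <= (4 * m Z)%:R by rewrite ler_nat.
  rewrite natrM /C => Hc'.
  rewrite add0r; nra.
have E3 : \sum_(i | X i) (1 - w0 mu i) <= (1 - B) * k%:R.
  apply: le_trans (_ : \sum_(i | X i) (1 - B) <= _).
    by apply: ler_sum => i Xi; rewrite lerD2l lerN2 Hi.
  have -> : \sum_(i | X i) (1 - B) = \sum_(i in [set i | X i]) (1 - B).
    by apply: eq_bigl => i; rewrite inE.
  by rewrite sumr_const -wk /weight mulr_natr.
have kR : (k%:R : R) != 0 by rewrite pnatr_eq0 -lt0n.
have Hk : (1 - B) * k%:R = C / 2.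
  rewrite /B /C /c; case: (odd k).
    rewrite -addn1 natrD; field; exact: kR.
  rewrite -addn2 natrD; field; exact: kR.
have Cpos : 0 < C by rewrite /C divr_gt0 // ltr0n /c; case: (odd k).
move: HP E2 E3 Hk Cpos; rewrite E1; nra.
Qed.
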